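(* Let $\mathcal{L}$ be an ordered field with a convex valuation with value group $\Gamma$, and let $A\in {\operatorname{\mathsf{TPD}}}_n(\mathbb{S}_{\max}^{\vee})$. Then, there exists a $n\times n$ symmetric positive definite matrix ${\bf A}$ over $\mathcal{L}$ such that $\mathrm{sv}({\bf A})= A$.
   Context: $\Gamma$ is a divisible totally ordered abelian group and $\mathbb{S}_{\max}=\mathbb{S}_{\max}(\Gamma)$ the symmetrized tropical semiring, with zero $\mathbf{0}$, unit $\mathbf{1}$, minus $\ominus$; $\mathbb{S}_{\max}^\vee$ is the set of signed elements. $A\in{\operatorname{\mathsf{TPD}}}_n(\mathbb{S}_{\max}^\vee)$ means $A=(a_{ij})$ symmetric with signed entries, $\mathbf{0}<a_{ii}$ and $a_{ij}^2<a_{ii}a_{jj}$ for $i\ne j$ (where $a<b$ iff $b\ominus a$ is positive). For an ordered field $\mathcal{L}$ with a convex (surjective, non-Archimedean) valuation $\mathrm v:\mathcal{L}\to\Gamma\cup\{\bot\}$, the signed valuation is $\mathrm{sv}(b)=\mathrm{sgn}(b)\odot\mathrm v(b)$, where $\mathrm{sgn}(b)$ is $\mathbf{1}$, $\ominus\mathbf{1}$ or $\mathbf{0}$ according as $b>0$, $b<0$, $b=0$; it is applied entrywise. *)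

(* Defs.v *)
From HB Require Import structures.
From mathcomp Require Import all_boot all_order all_algebra.
Set Implicit Arguments. Unset Strict Implicit. Unset Printing Implicit Defensive.
Import Order.TTheory GRing.Theory Num.Theory.
Local Open Scope ring_scope.

Definition ordered_abelian_group (G : zmodType) (le : rel G) : Prop :=
  [/\ (forall a, le a a),
      (forall a b, le a b -> le b a -> a = b),
      (forall a b c, le a b -> le b c -> le a c),
      (forall a b, le a b || le b a)
    & (forall a b c, le a b -> le (a + c) (b + c))].

Definition divisible_group (G : zmodType) : Prop :=
  forall (g : G) (n : nat), (0 < n)%N -> exists h : G, h *+ n = g.

Definition divisible_ordered_abelian_group (G : zmodType) (le : rel G) : Prop :=
  ordered_abelian_group le /\ divisible_group G.

(* The symmetrized tropical (max-plus) semiring S_max(Gamma).         *)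
(* Elements: 0 (the zero, -oo), (+)a, (-)a, and balanced a^o,         *)
(* for a in Gamma.                                                    *)
Inductive smax (G : Type) : Type :=
| SZero : smax G
| SPos : G -> smax G
| SNeg : G -> smax G
| SBal : G -> smax G.
Arguments SZero {G}.

Section Smax.
Variables (G : zmodType) (le : rel G).

Definition smax_mod (x : smax G) : option G :=
  match x with SZero => None | SPos a | SNeg a | SBal a => Some a end.

Definition smax_add (x y : smax G) : smax G :=
  match smax_mod x, smax_mod y with
  | None, _ => y
  | _, None => x
  | Some a, Some b =>
      if le a b && le b a then
        match x, y with
        | SPos _, SPos _ => x
        | SNeg _, SNeg _ => x
        | _, _ => SBal a
        end
      else if le b a then x else y
  end.

Definition smax_opp (x : smax G) : smax G :=
  match x with SZero => SZero | SPos a => SNeg a | SNeg a => SPos a | SBal a => SBal a end.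

Definition smax_mul (x y : smax G) : smax G :=
  match x, y with
  | SZero, _ | _, SZero => SZero
  | SBal a, SPos b | SBal a, SNeg b | SBal a, SBal b
  | SPos a, SBal b | SNeg a, SBal b => SBal (a + b)
  | SPos a, SPos b | SNeg a, SNeg b => SPos (a + b)
  | SPos a, SNeg b | SNeg a, SPos b => SNeg (a + b)
  end.

Definition smax_one : smax G := SPos 0.

Definition smax_positive (x : smax G) : bool :=
  if x is SPos _ then true else false.

(* signed elements: S_max^vee = S_max^+ u S_max^- (including 0) *)
Definition smax_signed (x : smax G) : bool :=
  if x is SBal _ then false else true.

Definition smax_lt (a b : smax G) : bool :=
  smax_positive (smax_add b (smax_opp a)).

Definition TPD (n : nat) (A : 'M[smax G]_n) : Prop :=
  [/\ (forall i j, smax_signed (A i j)),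
      A^T = A,
      (forall i, smax_lt SZero (A i i))
    & (forall i j, i != j ->
         smax_lt (smax_mul (A i j) (A i j)) (smax_mul (A i i) (A j j)))].

End Smax.

(* Valuations on an ordered field L, in max-plus convention,          *)
(* with values in Gamma u {bot}  (bot represented by None).           *)
Section Valuation.
Variables (G : zmodType) (le : rel G) (L : realFieldType).

Definition vle (x y : option G) : bool :=
  match x, y with
  | None, _ => true
  | Some _, None => false
  | Some a, Some b => le a b
  end.

Definition vmul (x y : option G) : option G :=
  match x, y with Some a, Some b => Some (a + b) | _, _ => None end.

Definition valuation (v : L -> option G) : Prop :=
  [/\ (forall x, v x = None <-> x = 0),
      (forall x y, v (x * y) = vmul (v x) (v y)),
      (forall x y, vle (v (x + y)) (v x) || vle (v (x + y)) (v y))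
    & (forall g, exists x, v x = Some g)].

Definition convex_valuation (v : L -> option G) : Prop :=
  valuation v /\ (forall a b : L, 0 <= a -> a <= b -> vle (v a) (v b)).

Definition sv (v : L -> option G) (b : L) : smax G :=
  match v b with
  | None => SZero
  | Some g => smax_mul (if 0 < b then smax_one G else if b < 0 then smax_opp (smax_one G) else SZero)
                       (SPos g)
  end.

Definition sym_posdef (n : nat) (B : 'M[L]_n) : Prop :=
  B^T = B /\ (forall x : 'cV[L]_n, x != 0 -> 0 < (x^T *m B *m x) 0 0).

End Valuation.

(* Main.v *)
Require Import Defs.
From HB Require Import structures.
From mathcomp Require Import all_boot all_order all_algebra.
From mathcomp Require Import ring lra zify.
Import Order.TTheory GRing.Theory Num.Theory.
Local Open Scope ring_scope.

Lemma quad_ineq (L : realFieldType) (k N bii bjj b xi xj : L) :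
  0 < bii -> 0 <= bjj -> N ^+ 2 = 4 * k -> k * b ^+ 2 <= bii * bjj ->
  0 <= N * (xi * b * xj) + bii * xi ^+ 2 + bjj * xj ^+ 2.
Proof.
move=> hi hj hN hk.
have h1 : 0 <= (bii * xi + N * b * xj / 2) ^+ 2 by exact: sqr_ge0.
have h2 : 0 <= (bii * bjj - k * b ^+ 2) * xj ^+ 2.
  by apply: mulr_ge0; [rewrite subr_ge0|exact: sqr_ge0].
have e : bii * (N * (xi * b * xj) + bii * xi ^+ 2 + bjj * xj ^+ 2) =
   (bii * xi + N * b * xj / 2) ^+ 2 + (bii * bjj - k * b ^+ 2) * xj ^+ 2.
  have -> : k = N ^+ 2 / 4 by rewrite hN mulrC mulKf // pnatr_eq0.
  field; rewrite ?pnatr_eq0 //.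
have : 0 <= bii * (N * (xi * b * xj) + bii * xi ^+ 2 + bjj * xj ^+ 2).
  by rewrite e; apply: addr_ge0.
by rewrite pmulr_rge0.
Qed.

Theorem proposition6p2 (G : zmodType) (le : rel G)
    (HG : divisible_ordered_abelian_group le)
    (L : realFieldType) (v : L -> option G) (Hv : convex_valuation le v)
    (n : nat) (A : 'M[smax G]_n) (HA : TPD le A) :
  exists B : 'M[L]_n, sym_posdef B /\ map_mx (sv v) B = A.
Proof.
case: HG => [[lrefl lanti ltrans ltot ladd] _].
case: Hv => [[v0 vM vU vS] vC].
have vz : v 0 = None by apply/v0.
have vnz x : x != 0 -> exists g, v x = Some g.
  move=> hx; case e: (v x) => [g|]; first by exists g.
  by move/v0: e => e; rewrite e eqxx in hx.
have v1 : v 1 = Some 0.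
  have [a ha] := vnz 1 (oner_neq0 L).
  have := vM 1 1; rewrite mulr1 ha /= => -[] e.
  congr Some; apply: (@addrI _ a); by rewrite addr0 -e.
have vm1 : v (-1) = Some 0.
  have hm1 : (-1 : L) != 0 by rewrite oppr_eq0 oner_neq0.
  have [a ha] := vnz (-1) hm1.
  have := vM (-1) (-1); rewrite mulrNN mulr1 ha v1 /= => -[] e.
  congr Some.
  case/orP: (ltot a 0) => h.
    have := ladd _ _ a h; rewrite add0r -e => h'; exact: lanti.
  have := ladd _ _ a h; rewrite add0r -e => h'; exact: lanti.
have vN x : v (- x) = v x.
  by rewrite -mulN1r vM vm1; case: (v x) => //= g; rewrite add0r.
have vnorm x : v `|x| = v x.
  by case: (leP 0 x) => h; [rewrite ger0_norm | rewrite ltr0_norm // vN].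
have vletr : forall a b c, vle le a b -> vle le b c -> vle le a c.
  by move=> [a|] [b|] [c|] //=; apply: ltrans.
have vnat k : vle le (v k%:R) (Some 0).
  elim: k => [|k IH]; first by rewrite vz.
  rewrite -addn1 natrD addrC; case/orP: (vU 1 k%:R) => h; first by rewrite -v1.
  exact: vletr h IH.
have wP : forall g : G, exists x : L, v x == Some g.
  by move=> g; case: (vS g) => x <-; exists x.
pose w g := xchoose (wP g).
have vw g : v (w g) = Some g by apply/eqP; exact: (xchooseP (wP g)).
have wpos g : 0 < `|w g|.
  rewrite normr_gt0; apply/negP => /eqP /v0; by rewrite vw.
pose f (a : smax G) : L :=
  match a with SPos g => `|w g| | SNeg g => - `|w g| | _ => 0 end.
case: HA => Hsig Hsym Hdiag Hoff.
have HsymE i j : A j i = A i j.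
  by rewrite -[in RHS]Hsym mxE.
have svf a : smax_signed a -> sv v (f a) = a.
  case: a => //= [|g|g] _.
  - by rewrite /sv vz.
  - by rewrite /sv vnorm vw wpos /= add0r.
  - rewrite /sv vN vnorm vw oppr_gt0 ltNge ltW ?wpos //= oppr_lt0 wpos /=.
    by rewrite add0r.
pose B := \matrix_(i, j) f (A i j).
exists B; split; last first.
  by apply/matrixP => i j; rewrite !mxE svf.
split.
  by apply/matrixP => i j; rewrite !mxE HsymE.
have diag i : exists d, A i i = SPos d.
  move: (Hdiag i); case: (A i i) => [|d|d|d]; rewrite /smax_lt /smax_add //= => _.
  by exists d.
have bdiag i : 0 < B i i /\ exists d, v (B i i) = Some d /\ A i i = SPos d.
  have [d hd] := diag i; rewrite mxE hd /=; split; first exact: wpos.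
  by exists d; rewrite vnorm vw.
pose k : L := (4 * n ^ 2)%:R.
pose N : L := (4 * n)%:R.
have hN : N ^+ 2 = 4 * k.
  by rewrite /N /k -natrX -natrM; congr _%:R; rewrite expnMn; lia.
have key i j : i != j -> k * B i j ^+ 2 <= B i i * B j j.
  move=> hij.
  have [hi [di [vdi Adi]]] := bdiag i.
  have [hj [dj [vdj Adj]]] := bdiag j.
  have hpos : 0 < B i i * B j j by apply: mulr_gt0.
  have H := Hoff i j hij.
  have gen : forall g : G, ~~ le (di + dj) (g + g) ->
     k * `|w g| ^+ 2 <= B i i * B j j.
    move=> g hg; rewrite leNgt; apply/negP => hlt.
    have := vC _ _ (ltW hpos) (ltW hlt).
    rewrite vM vdi vdj vM expr2 vM vnorm vw.
    have kn0 : k != 0 by rewrite /k pnatr_eq0 muln_eq0 /= expn_eq0 andbT;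
      apply/eqP => n0; move: (i); rewrite n0 => -[].
    have [e he] := vnz k kn0.
    have := vnat (4 * n ^ 2)%N; rewrite -/k he /= => hle.
    move=> h2; apply: (negP hg); apply: ltrans h2 _.
    by have := ladd _ _ (g + g) hle; rewrite add0r.
  move: H; rewrite [B i j]mxE Adi Adj /smax_lt /=.
  case: (A i j) (Hsig i j) => //= [|g|g] _.
  - by rewrite expr0n /= mulr0 => _; apply: ltW.
  - rewrite /smax_add /=.
    case E: (le (di + dj) (g + g)) => //=; case: (le (g + g) (di + dj)) => //=.
    by move=> _; apply: gen; rewrite E.
  - rewrite /smax_add /=.
    case E: (le (di + dj) (g + g)) => //=; case: (le (g + g) (di + dj)) => //=.
    by move=> _; rewrite sqrrN; apply: gen; rewrite E.
move=> x xn0.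
have [i0 xi0] : exists i, x i 0 != 0.
  apply/existsP; move: xn0; apply: contraR; rewrite negb_exists => /forallP h.
  apply/eqP/matrixP => i j; rewrite ord1 mxE; apply/eqP.
  by move: (h i); rewrite negbK.
have n0 : (0 < n)%N by case: n i0 {A B Hsig Hsym Hdiag Hoff HsymE diag bdiag key x xn0 xi0 k N hN} => // -[].
pose p i := B i i * x i 0 ^+ 2.
have p0 i : 0 <= p i by apply: mulr_ge0; [apply: ltW; case: (bdiag i)| apply: sqr_ge0].
pose P := \sum_i p i.
have P0 : 0 < P.
  rewrite /P (bigD1 i0) //=; apply: ltr_pwDl; last by apply: sumr_ge0.
  apply: mulr_gt0; first by case: (bdiag i0).
  by rewrite lt_def sqr_ge0 sqrf_eq0 xi0.
have form : (x^T *m B *m x) 0 0 = \sum_j \sum_i x i 0 * B i j * x j 0.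
  rewrite mxE; apply: eq_bigr => j _; rewrite mxE big_distrl; apply: eq_bigr => i _.
  by rewrite !mxE.
have bnd i j : (if i == j then N * p i else 0) - p i - p j <= N * (x i 0 * B i j * x j 0).
  case: eqP => [<-|/eqP hij].
    have := p0 i; rewrite /p.
    have : 0 <= N by rewrite /N ler0n.
    nra.
  have := @quad_ineq L k N (B i i) (B j j) (B i j) (x i 0) (x j 0) (proj1 (bdiag i)) (ltW (proj1 (bdiag j))) hN (key i j hij).
  rewrite /p; lra.
rewrite form.
have hN0 : 0 < N by rewrite /N ltr0n muln_gt0.
have hsum : \sum_j \sum_i ((if i == j then N * p i else 0) - p i - p j)
    <= N * \sum_j \sum_i x i 0 * B i j * x j 0.
  rewrite mulr_sumr; apply: ler_sum => j _; rewrite mulr_sumr; apply: ler_sum => i _.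
  exact: bnd.
have e : \sum_j \sum_i ((if i == j then N * p i else 0) - p i - p j) =
    N * P - P *+ n - P *+ n.
  under eq_bigr => j _ do rewrite sumrB sumrB -big_mkcond big_pred1_eq sumr_const card_ord.
  by rewrite sumrB sumrB -mulr_sumr sumr_const card_ord -sumrMnl.
move: hsum; rewrite e -[P *+ n]mulr_natr.
set S := \sum_j _ => hS.
have hn : (0 < n%:R :> L) by rewrite ltr0n.
have hNn : N = 4 * n%:R by rewrite /N natrM.
have h2 : 0 < P * n%:R by apply: mulr_gt0.
have : 0 < N * S.
  apply: lt_le_trans hS; rewrite hNn.
  have -> : 4 * n%:R * P - P * n%:R - P * n%:R = (P * n%:R) *+ 2 by ring.
  by rewrite pmulrn_rgt0.
by rewrite pmulr_rgt0.
Qed.
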